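(* Let $\mathcal X$ be a separable metric space with at least two points. Let $\varepsilon\in[0,1)$ and let $T$ be a test (a map from $\Delta^*$ to the open subsets of $\Omega$) such that $P(T(P))\le\varepsilon$ for every $P\in\Delta^*$. Then for every $\delta\in(0,1-\varepsilon]$ there exists a probability measure $\zeta$ on $\Delta^*$ with finite support such that $\zeta(\{P\in\Delta^*:\omega\notin T(P)\})\ge1-\varepsilon-\delta$ for every $\omega\in\Omega$.
   Context: $\Omega=\mathcal X^{\mathbb N}$ with the product topology; for $\omega\in\Omega$, $t\ge0$, $\omega^t$ is the cylinder of paths agreeing with $\omega$ in the first $t$ coordinates ($\omega^0=\Omega$); $\mathcal H$ is the set of all cylinders. $\Sigma$ is a $\sigma$-algebra on $\Omega$ containing all open sets; $\mathbb P$ is the set of finitely additive probabilities on $(\Omega,\Sigma)$; $P\in\mathbb P$ is strongly nonatomic if for every $E\in\Sigma$, $\alpha\in[0,1]$ there is $F\in\Sigma$, $F\subseteq E$, with $P(F)=\alpha P(E)$. A conditional probability is a function $P:\Sigma\times\mathcal H\to[0,1]$ such that for every $t\ge0$ and $\omega$: (1) $P(\cdot\mid\omega^t)\in\mathbb P$; (2) $P(\omega^t\mid\omega^t)=1$; (3) $P(E\cap\omega^{t+n}\mid\omega^t)=P(E\mid\omega^{t+n})P(\omega^{t+n}\mid\omega^t)$ for all $E\in\Sigma$, $n\ge0$. It is a conditional opinion if $P(\cdot\mid\Omega)$ is strongly nonatomic; $\Delta^*$ is the set of conditional opinions. We write $P(E)$ for $P(E\mid\Omega)$. *)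

(* Defs.v *)
From Stdlib Require Import Reals ClassicalEpsilon.
Open Scope R_scope.

Definition is_metric {X : Type} (d : X -> X -> R) : Prop :=
  (forall x y, 0 <= d x y) /\
  (forall x y, d x y = 0 <-> x = y) /\
  (forall x y, d x y = d y x) /\
  (forall x y z, d x z <= d x y + d y z).

Definition separable {X : Type} (d : X -> X -> R) : Prop :=
  exists s : nat -> X, forall x eps, 0 < eps -> exists n, d x (s n) < eps.

(* Path space Omega = X^N; subsets of Omega are predicates. *)
Definition path (X : Type) := nat -> X.
Definition pset (X : Type) := path X -> Prop.

Definition full {X : Type} : pset X := fun _ => True.

Definition cyl {X : Type} (t : nat) (w : path X) : pset X :=
  fun w' => forall i, (i < t)%nat -> w' i = w i.

(* Open sets of the product topology on X^N (X with metric d). *)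
Definition is_open {X : Type} (d : X -> X -> R) (U : pset X) : Prop :=
  forall w, U w -> exists (n : nat) (eps : R), 0 < eps /\
    forall w', (forall i, (i < n)%nat -> d (w i) (w' i) < eps) -> U w'.

Definition sigma_alg_opens {X : Type} (d : X -> X -> R) (Sigma : pset X -> Prop) : Prop :=
  Sigma full /\
  (forall E, Sigma E -> Sigma (fun w => ~ E w)) /\
  (forall A : nat -> pset X, (forall n, Sigma (A n)) -> Sigma (fun w => exists n, A n w)) /\
  (forall U, is_open d U -> Sigma U).

Definition fa_prob {X : Type} (Sigma : pset X -> Prop) (p : pset X -> R) : Prop :=
  (forall E, Sigma E -> 0 <= p E) /\
  p full = 1 /\
  (forall E F, Sigma E -> Sigma F -> (forall w, E w -> F w -> False) ->
     p (fun w => E w \/ F w) = p E + p F).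

Definition strongly_nonatomic {X : Type} (Sigma : pset X -> Prop) (p : pset X -> R) : Prop :=
  forall E alpha, Sigma E -> 0 <= alpha <= 1 ->
    exists F, Sigma F /\ (forall w, F w -> E w) /\ p F = alpha * p E.

(* Conditional probability: P E H = P(E | H), only meaningful for E in Sigma
   and H a cylinder. *)
Definition cond_prob {X : Type} (Sigma : pset X -> Prop) (P : pset X -> pset X -> R) : Prop :=
  forall (t : nat) (w : path X),
    fa_prob Sigma (fun E => P E (cyl t w)) /\
    P (cyl t w) (cyl t w) = 1 /\
    (forall E (n : nat), Sigma E ->
       P (fun x => E x /\ cyl (t + n) w x) (cyl t w)
       = P E (cyl (t + n) w) * P (cyl (t + n) w) (cyl t w)).

Definition cond_opinion {X : Type} (Sigma : pset X -> Prop) (P : pset X -> pset X -> R) : Prop :=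
  cond_prob Sigma P /\ strongly_nonatomic Sigma (fun E => P E full).

Definition DeltaStar {X : Type} (Sigma : pset X -> Prop) : Type :=
  { P : pset X -> pset X -> R | cond_opinion Sigma P }.

Definition uncond {X : Type} {Sigma : pset X -> Prop} (P : DeltaStar Sigma) (E : pset X) : R :=
  proj1_sig P E full.

Definition indic (A : Prop) : R :=
  if excluded_middle_informative A then 1 else 0.

Fixpoint fsum (n : nat) (f : nat -> R) : R :=
  match n with
  | O => 0
  | S m => fsum m f + f m
  end.

(* Main.v *)
Require Import Defs.
From Stdlib Require Import Reals Lra Lia ZArith Cantor ClassicalEpsilon Classical FunctionalExtensionality PropExtensionality.
From mathcomp Require classical_sets filter boolp.
Open Scope R_scope.

Record ultra {I : Type} (U : (I -> Prop) -> Prop) : Prop := {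
  u_up : forall A B : I -> Prop, (forall i, A i -> B i) -> U A -> U B;
  u_and : forall A B : I -> Prop, U A -> U B -> U (fun i => A i /\ B i);
  u_full : U (fun _ => True);
  u_nempty : ~ U (fun _ => False);
  u_ult : forall A : I -> Prop, U A \/ U (fun i => ~ A i) }.

Definition is_ulim {I} (U : (I -> Prop) -> Prop) (x : I -> R) (l : R) :=
  forall eta, 0 < eta -> U (fun i => Rabs (x i - l) < eta).

Definition ulim {I} (U : (I -> Prop) -> Prop) (x : I -> R) : R :=
  epsilon (inhabits 0) (is_ulim U x).

Lemma abs_bnd y B : Rabs y <= B -> -B <= y <= B.
Proof. intros H. pose proof (Rle_abs y). pose proof (Rle_abs (-y)). rewrite Rabs_Ropp in H1. lra. Qed.

Section UL.
Context {I : Type} (U : (I -> Prop) -> Prop) (HU : ultra U).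

Lemma u_nonempty A : U A -> exists i, A i.
Proof.
  intros HA. apply NNPP. intro Hn. apply (u_nempty U HU).
  apply (u_up U HU A); [|exact HA]. intros i Ai. apply Hn. exists i; exact Ai.
Qed.

Lemma is_ulim_uniq x l1 l2 : is_ulim U x l1 -> is_ulim U x l2 -> l1 = l2.
Proof.
  intros H1 H2. apply NNPP; intro Hne.
  set (e := Rabs (l1 - l2) / 2).
  assert (He : 0 < e). { unfold e. assert (0 < Rabs (l1 - l2)). { apply Rabs_pos_lt. lra. } lra. }
  destruct (u_nonempty _ (u_and U HU _ _ (H1 e He) (H2 e He))) as [i [A B]].
  assert (Rabs (l1 - l2) <= Rabs (x i - l1) + Rabs (x i - l2)).
  { replace (l1 - l2) with (-(x i - l1) + (x i - l2)) by ring.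
    eapply Rle_trans; [apply Rabs_triang|]. rewrite Rabs_Ropp. lra. }
  unfold e in *. lra.
Qed.

Lemma ulim_unique x l : is_ulim U x l -> ulim U x = l.
Proof.
  intros H. unfold ulim. apply (is_ulim_uniq x); [|exact H].
  apply epsilon_spec. exists l; exact H.
Qed.

Lemma is_ulim_exists x B : (forall i, Rabs (x i) <= B) -> exists l, is_ulim U x l.
Proof.
  intros HB.
  set (S := fun r => U (fun i => r <= x i)).
  assert (Sb : bound S).
  { exists B. intros r Sr. apply Rnot_lt_le. intro Hlt.
    apply (u_nempty U HU). apply (u_up U HU (fun i => r <= x i)); [|exact Sr].
    intros i Hi. specialize (HB i). apply abs_bnd in HB. lra. }
  assert (Sne : exists r, S r).
  { exists (-B). eapply (u_up U HU); [|exact (u_full U HU)].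
    intros i _. specialize (HB i). apply abs_bnd in HB. lra. }
  destruct (completeness S Sb Sne) as [l [Hub Hlub]].
  exists l. intros eta Heta.
  assert (H1 : U (fun i => x i < l + eta / 2)).
  { destruct (u_ult U HU (fun i => l + eta/2 <= x i)) as [H|H].
    - exfalso. specialize (Hub _ H). lra.
    - eapply (u_up U HU); [|exact H]. intros i Hi. lra. }
  assert (H2 : exists r, S r /\ l - eta/2 < r).
  { apply NNPP; intro Hn.
    assert (is_upper_bound S (l - eta/2)).
    { intros r Sr. apply Rnot_lt_le. intro Hlt. apply Hn. exists r; split; auto. }
    specialize (Hlub _ H). lra. }
  destruct H2 as [r [Sr Hr]].
  eapply (u_up U HU); [|exact (u_and U HU _ _ H1 Sr)].
  intros i [A B']. apply Rabs_def1; lra.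
Qed.

Lemma ulim_spec x B : (forall i, Rabs (x i) <= B) -> is_ulim U x (ulim U x).
Proof.
  intros HB. destruct (is_ulim_exists x B HB) as [l Hl].
  rewrite (ulim_unique x l Hl). exact Hl.
Qed.

Definition bnd (x : I -> R) := exists B, forall i, Rabs (x i) <= B.

Lemma ulim_add x y : bnd x -> bnd y -> ulim U (fun i => x i + y i) = ulim U x + ulim U y.
Proof.
  intros [Bx Hx] [By Hy]. apply ulim_unique. intros eta Heta.
  pose proof (ulim_spec x Bx Hx (eta/2) ltac:(lra)) as A.
  pose proof (ulim_spec y By Hy (eta/2) ltac:(lra)) as B.
  eapply (u_up U HU); [|exact (u_and U HU _ _ A B)].
  intros i [Ai Bi].
  replace (x i + y i - (ulim U x + ulim U y)) with ((x i - ulim U x) + (y i - ulim U y)) by ring.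
  eapply Rle_lt_trans; [apply Rabs_triang|]. lra.
Qed.

Lemma ulim_scal c x : bnd x -> ulim U (fun i => c * x i) = c * ulim U x.
Proof.
  intros [Bx Hx]. apply ulim_unique. intros eta Heta.
  pose proof (ulim_spec x Bx Hx (eta / (Rabs c + 1))) as A.
  assert (0 < eta / (Rabs c + 1)). { apply Rdiv_lt_0_compat; [lra|]. pose proof (Rabs_pos c); lra. }
  specialize (A H).
  eapply (u_up U HU); [|exact A]. intros i Ai.
  replace (c * x i - c * ulim U x) with (c * (x i - ulim U x)) by ring.
  rewrite Rabs_mult.
  assert (Rabs c * Rabs (x i - ulim U x) <= Rabs c * (eta / (Rabs c + 1))).
  { apply Rmult_le_compat_l; [apply Rabs_pos|lra]. }
  assert (Rabs c * (eta / (Rabs c + 1)) < eta).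
  { unfold Rdiv. pose proof (Rabs_pos c).
    apply (Rmult_lt_reg_r (Rabs c + 1)); [lra|].
    replace (Rabs c * (eta * / (Rabs c + 1)) * (Rabs c + 1)) with (Rabs c * eta) by (field; lra). nra. }
  lra.
Qed.

Lemma ulim_le x r : bnd x -> U (fun i => x i <= r) -> ulim U x <= r.
Proof.
  intros [Bx Hx] H. apply Rnot_lt_le. intro Hlt.
  pose proof (ulim_spec x Bx Hx (ulim U x - r) ltac:(lra)) as A.
  destruct (u_nonempty _ (u_and U HU _ _ A H)) as [i [Ai Bi]].
  apply Rabs_def2 in Ai. lra.
Qed.

Lemma ulim_ge x r : bnd x -> U (fun i => r <= x i) -> r <= ulim U x.
Proof.
  intros [Bx Hx] H. apply Rnot_lt_le. intro Hlt.
  pose proof (ulim_spec x Bx Hx (r - ulim U x) ltac:(lra)) as A.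
  destruct (u_nonempty _ (u_and U HU _ _ A H)) as [i [Ai Bi]].
  apply Rabs_def2 in Ai. lra.
Qed.

Lemma ulim_close x y : bnd x -> (forall eta, 0 < eta -> U (fun i => Rabs (x i - y i) < eta)) ->
  ulim U y = ulim U x.
Proof.
  intros [Bx Hx] H. apply ulim_unique. intros eta Heta.
  pose proof (ulim_spec x Bx Hx (eta/2) ltac:(lra)) as A.
  eapply (u_up U HU); [|exact (u_and U HU _ _ A (H (eta/2) ltac:(lra)))].
  intros i [Ai Bi].
  replace (y i - ulim U x) with (-(x i - y i) + (x i - ulim U x)) by ring.
  eapply Rle_lt_trans; [apply Rabs_triang|]. rewrite Rabs_Ropp. lra.
Qed.

Lemma bnd01 x : (forall i, 0 <= x i <= 1) -> bnd x.
Proof. intros H. exists 1. intros i. specialize (H i). rewrite Rabs_pos_eq; lra. Qed.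

Lemma ulim_01 x : (forall i, 0 <= x i <= 1) -> 0 <= ulim U x <= 1.
Proof.
  intros H. split.
  - apply ulim_ge; [apply bnd01; auto|]. eapply (u_up U HU); [|exact (u_full U HU)]. intros i _; apply H.
  - apply ulim_le; [apply bnd01; auto|]. eapply (u_up U HU); [|exact (u_full U HU)]. intros i _; apply H.
Qed.

End UL.

Lemma Rdiv_le_0_compat x y : 0 <= x -> 0 < y -> 0 <= x / y.
Proof. intros; unfold Rdiv; apply Rmult_le_pos; [auto|left; apply Rinv_0_lt_compat; auto]. Qed.

Lemma fsum_ext n f g : (forall i, (i < n)%nat -> f i = g i) -> fsum n f = fsum n g.
Proof. induction n; simpl; intros H; [reflexivity|]. rewrite IHn by (intros; apply H; lia). rewrite H by lia. reflexivity. Qed.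
Lemma fsum_add n f g : fsum n (fun i => f i + g i) = fsum n f + fsum n g.
Proof. induction n; simpl; [ring|]. rewrite IHn. ring. Qed.
Lemma fsum_scal n c f : fsum n (fun i => c * f i) = c * fsum n f.
Proof. induction n; simpl; [ring|]. rewrite IHn. ring. Qed.
Lemma fsum_le n f g : (forall i, (i < n)%nat -> f i <= g i) -> fsum n f <= fsum n g.
Proof. induction n; simpl; intros H; [lra|]. pose proof (H n ltac:(lia)). pose proof (IHn ltac:(intros; apply H; lia)). lra. Qed.
Lemma fsum_nonneg n f : (forall i, (i < n)%nat -> 0 <= f i) -> 0 <= fsum n f.
Proof. intros H. replace 0 with (fsum n (fun _ => 0)). apply fsum_le; auto. induction n; simpl; auto. rewrite IHn; [ring|]. intros; apply H; lia. Qed.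
Lemma fsum_const n c : fsum n (fun _ => c) = INR n * c.
Proof. induction n; simpl fsum; [simpl; ring|]. rewrite IHn, S_INR. ring. Qed.
Lemma fsum_single n f j : (j < n)%nat -> (forall i, (i < n)%nat -> 0 <= f i) -> f j <= fsum n f.
Proof.
  induction n; intros Hj H; [lia|]. simpl.
  destruct (Nat.eq_dec j n) as [->|Hne].
  - pose proof (fsum_nonneg n f ltac:(intros; apply H; lia)). lra.
  - pose proof (IHn ltac:(lia) ltac:(intros; apply H; lia)). pose proof (H n ltac:(lia)). lra.
Qed.

Lemma indic_true (A : Prop) : A -> indic A = 1.
Proof. intros HA. unfold indic. destruct (excluded_middle_informative A); tauto. Qed.
Lemma indic_false (A : Prop) : ~ A -> indic A = 0.
Proof. intros HA. unfold indic. destruct (excluded_middle_informative A); tauto. Qed.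
Lemma indic_01 (A : Prop) : 0 <= indic A <= 1.
Proof. unfold indic. destruct (excluded_middle_informative A); lra. Qed.
Lemma indic_mono (A B : Prop) : (A -> B) -> indic A <= indic B.
Proof. intros H. unfold indic. destruct (excluded_middle_informative A), (excluded_middle_informative B); try lra. tauto. Qed.

Definition indicn (A : Prop) : nat := if excluded_middle_informative A then 1%nat else 0%nat.
Lemma INR_indicn A : INR (indicn A) = indic A.
Proof. unfold indicn, indic. destruct (excluded_middle_informative A); simpl; reflexivity. Qed.

Lemma pow_dec (x : R) m k : 0 <= x <= 1 -> x ^ (m + k) <= x ^ m.
Proof.
  intros Hx. rewrite pow_add. assert (0 <= x ^ m) by (apply pow_le; lra).
  assert (x ^ k <= 1). { replace 1 with (1 ^ k) by apply pow1. apply pow_incr; lra. }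
  assert (0 <= x ^ k) by (apply pow_le; lra). nra.
Qed.

Lemma bernoulli h n : 0 <= h <= 1 -> 1 - INR n * h <= (1 - h) ^ n.
Proof.
  intros Hh. induction n; [simpl; lra|]. rewrite S_INR. cbn [pow].
  assert (0 <= (1-h)^n) by (apply pow_le; lra). pose proof (pos_INR n). nra.
Qed.

Lemma pow_upper x n : 0 <= x <= 1 -> (1 - x) ^ n <= 1 - INR n * x + INR n * INR n * x * x / 2.
Proof.
  intros Hx. induction n; [simpl; lra|]. rewrite S_INR. cbn [pow].
  pose proof (pos_INR n). set (nn := INR n) in *.
  assert (H1 : (1 - x) * (1 - x) ^ n <= (1 - x) * (1 - nn * x + nn * nn * x * x / 2)).
  { apply Rmult_le_compat_l; lra. }
  eapply Rle_trans; [exact H1|].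
  assert (0 <= nn * nn * x * x * x) by (apply Rmult_le_pos; [apply Rmult_le_pos;[apply Rmult_le_pos;[nra|lra]|lra]|lra]).
  nra.
Qed.

Section Hedge.
Variable M : nat.
Variable Rel : nat -> nat -> Prop.
Variable c : R.
Variables a b : nat.
Hypothesis Hc : 0 < c <= 1.
Hypothesis Hb : (1 <= b)%nat.
Hypothesis Hab : INR a < INR b * c.
Hypothesis G : forall wt : nat -> R, (forall j, (j < M)%nat -> 0 <= wt j) -> fsum M wt = 1 ->
  exists m, fsum M (fun j => wt j * indic (Rel j m)) > c.

Definition gm (wt : nat -> R) : nat :=
  epsilon (inhabits 0%nat) (fun m => fsum M (fun j => wt j * indic (Rel j m)) > c).

Variable beta : R.
Definition Wf (L : nat -> nat) := fsum M (fun j => beta ^ (L j)).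
Definition wts (L : nat -> nat) (j : nat) := beta ^ (L j) / Wf L.

Fixpoint cntf (t : nat) : nat -> nat :=
  match t with
  | O => fun _ => O
  | S t' => fun j => (cntf t' j + indicn (Rel j (gm (wts (cntf t')))))%nat
  end.
Definition ms (t : nat) := gm (wts (cntf t)).

Lemma cntf_sum N j : INR (cntf N j) = fsum N (fun t => indic (Rel j (ms t))).
Proof. induction N; simpl cntf; simpl fsum; [reflexivity|]. rewrite plus_INR, IHN, INR_indicn. reflexivity. Qed.

Hypothesis Hbeta : 0 < beta < 1.
Hypothesis HM : (1 <= M)%nat.

Lemma Wf_pos L : 0 < Wf L.
Proof.
  unfold Wf. assert (0 < beta ^ (L 0%nat)) by (apply pow_lt; lra).
  pose proof (fsum_single M (fun j => beta ^ (L j)) 0 ltac:(lia) ltac:(intros; apply pow_le; lra)). simpl in H0. lra.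
Qed.

Lemma Wf_step t : Wf (cntf (S t)) <= (1 - (1 - beta) * c) * Wf (cntf t).
Proof.
  set (L := cntf t).
  assert (Hw : forall j, (j < M)%nat -> 0 <= wts L j).
  { intros j _. unfold wts. apply Rdiv_le_0_compat; [apply pow_le; lra|apply Wf_pos]. }
  assert (Hs : fsum M (wts L) = 1).
  { unfold wts. unfold Rdiv. rewrite (fsum_ext M _ (fun j => / Wf L * beta ^ (L j))) by (intros; ring).
    rewrite fsum_scal. fold (Wf L). pose proof (Wf_pos L). field. lra. }
  pose proof (epsilon_spec (inhabits 0%nat) (fun m => fsum M (fun j => wts L j * indic (Rel j m)) > c) (G _ Hw Hs)) as Hg.
  fold (gm (wts L)) in Hg. set (m := gm (wts L)) in *.
  assert (E : Wf (cntf (S t)) = Wf L - (1 - beta) * fsum M (fun j => beta ^ (L j) * indic (Rel j m))).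
  { unfold Wf. simpl cntf. fold L. fold m.
    transitivity (fsum M (fun j => beta^(L j) + (-(1-beta)) * (beta^(L j) * indic (Rel j m)))).
    - apply fsum_ext. intros j _. rewrite pow_add. unfold indicn, indic.
      destruct (excluded_middle_informative (Rel j m)); simpl; ring.
    - rewrite fsum_add, fsum_scal. ring. }
  rewrite E.
  assert (E2 : fsum M (fun j => beta ^ (L j) * indic (Rel j m)) = Wf L * fsum M (fun j => wts L j * indic (Rel j m))).
  { rewrite <- fsum_scal. apply fsum_ext. intros j _. unfold wts. pose proof (Wf_pos L). field. lra. }
  rewrite E2. pose proof (Wf_pos L). assert (0 < 1 - beta) by lra.
  assert ((1 - beta) * (Wf L * c) <= (1 - beta) * (Wf L * fsum M (fun j => wts L j * indic (Rel j m)))).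
  { apply Rmult_le_compat_l; [lra|]. apply Rmult_le_compat_l; lra. }
  nra.
Qed.

Lemma Wf_N N : Wf (cntf N) <= (1 - (1 - beta) * c) ^ N * INR M.
Proof.
  induction N.
  - simpl. unfold Wf. simpl cntf. rewrite (fsum_ext M _ (fun _ => 1)) by (intros; simpl; reflexivity). rewrite fsum_const. lra.
  - eapply Rle_trans; [apply Wf_step|]. simpl pow.
    assert (0 <= 1 - (1 - beta) * c) by nra.
    rewrite Rmult_assoc. apply Rmult_le_compat_l; auto.
Qed.

Lemma beta_cnt N j : (j < M)%nat -> beta ^ (cntf N j) <= (1 - (1 - beta) * c) ^ N * INR M.
Proof.
  intros Hj. eapply Rle_trans; [|apply Wf_N]. unfold Wf.
  apply (fsum_single M (fun j => beta ^ (cntf N j))); auto. intros; apply pow_le; lra.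
Qed.
End Hedge.


Lemma hedge (M : nat) (Rel : nat -> nat -> Prop) (c : R) (a b : nat) :
  0 < c <= 1 -> (1 <= b)%nat -> INR a < INR b * c ->
  (forall wt : nat -> R, (forall j, (j < M)%nat -> 0 <= wt j) -> fsum M wt = 1 ->
     exists m, fsum M (fun j => wt j * indic (Rel j m)) > c) ->
  exists (N : nat) (ms : nat -> nat), (0 < N)%nat /\
    forall j, (j < M)%nat -> INR a * INR N <= INR b * fsum N (fun t => indic (Rel j (ms t))).
Proof.
  intros Hc Hb Hab G.
  destruct M as [|M'].
  { exists 1%nat, (fun _ => 0%nat). split; [lia|]. intros; lia. }
  set (M := S M').
  assert (HbR : 1 <= INR b) by (apply (le_INR 1); exact Hb).
  set (bb := INR b) in *. set (aa := INR a) in *.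
  assert (Haa : 0 <= aa) by apply pos_INR.
  set (h := Rmin (1/2) ((bb * c - aa) / (bb * bb))).
  assert (Hh : 0 < h <= 1/2).
  { unfold h. split; [apply Rmin_glb_lt; [lra|apply Rdiv_lt_0_compat; nra]|apply Rmin_l]. }
  assert (Hh2 : h <= (bb * c - aa) / (bb * bb)) by apply Rmin_r.
  assert (Hh3 : h * (bb * bb) <= bb * c - aa).
  { apply (Rmult_le_compat_r (bb * bb)) in Hh2; [|nra]. unfold Rdiv in Hh2.
    rewrite Rmult_assoc, Rinv_l in Hh2 by nra. lra. }
  set (beta := 1 - h).
  set (gam := 1 - (1 - beta) * c).
  assert (Hgam : gam = 1 - h * c) by (unfold gam, beta; ring).
  assert (Hgb : gam ^ b < beta ^ a).
  { rewrite Hgam. pose proof (pow_upper (h * c) b ltac:(split; nra)) as U1.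
    pose proof (bernoulli h a ltac:(lra)) as U2. fold bb in U1. fold aa in U2. unfold beta.
    assert (bb * bb * (h * c) * (h * c) / 2 < h * (bb * c - aa)).
    { assert (bb * bb * (h*c) * (h*c) <= h * (h * (bb * bb))).
      { assert (c * c <= 1) by nra. assert (0 <= h * h * (bb * bb)) by nra. nra. }
      assert (h * (h * (bb * bb)) <= h * (bb * c - aa)) by (apply Rmult_le_compat_l; lra).
      assert (0 < h * (bb * c - aa)) by nra. lra. }
    nra. }
  assert (Hbpos : 0 < beta ^ a) by (apply pow_lt; unfold beta; lra).
  assert (Hgpos : 0 <= gam ^ b) by (apply pow_le; rewrite Hgam; nra).
  set (rho := gam ^ b / beta ^ a).
  assert (Hrho : 0 <= rho < 1).
  { unfold rho. split; [apply Rdiv_le_0_compat; lra|]. apply (Rmult_lt_reg_r (beta ^ a)); auto.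
    unfold Rdiv. rewrite Rmult_assoc, Rinv_l by lra. lra. }
  assert (HMpos : 0 < INR M) by (unfold M; rewrite S_INR; pose proof (pos_INR M'); lra).
  destruct (pow_lt_1_zero rho ltac:(rewrite Rabs_pos_eq; lra) (/ INR M) ltac:(apply Rinv_0_lt_compat; lra)) as [r0 Hr0].
  set (r := S r0). specialize (Hr0 r ltac:(unfold r; lia)). rewrite Rabs_pos_eq in Hr0 by (apply pow_le; lra).
  exists (b * r)%nat, (ms M Rel c beta).
  split; [unfold r; nia|].
  intros j Hj.
  assert (Hbeta : 0 < beta < 1) by (unfold beta; lra).
  pose proof (beta_cnt M Rel c b Hc Hb G beta Hbeta ltac:(unfold M; lia) (b * r) j Hj) as B1. fold gam in B1.
  assert (B2 : gam ^ (b * r) * INR M < beta ^ (a * r)).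
  { rewrite !pow_mult.
    assert (gam ^ b = rho * beta ^ a) by (unfold rho; field; lra). rewrite H, Rpow_mult_distr.
    assert (0 < (beta ^ a) ^ r) by (apply pow_lt; lra).
    apply (Rmult_lt_compat_r (INR M)) in Hr0; auto. rewrite Rinv_l in Hr0 by lra.
    assert (0 <= rho ^ r) by (apply pow_le; lra). nra. }
  assert (Hcnt : (a * r <= cntf M Rel c beta (b * r) j)%nat).
  { destruct (Compare_dec.le_lt_dec (a * r) (cntf M Rel c beta (b * r) j)) as [Hl|Hl]; [exact Hl|exfalso].
    pose proof (pow_dec beta (cntf M Rel c beta (b * r) j) (a * r - cntf M Rel c beta (b * r) j) ltac:(lra)) as P.
    replace (cntf M Rel c beta (b * r) j + (a * r - cntf M Rel c beta (b * r) j))%nat with (a * r)%nat in P by lia.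
    lra. }
  rewrite <- cntf_sum. apply le_INR in Hcnt. rewrite !mult_INR in *.
  fold aa bb in Hcnt |- *. apply (Rmult_le_compat_l bb) in Hcnt; lra.
Qed.

Lemma nat_above r : exists N : nat, r < INR N.
Proof.
  destruct (Rlt_le_dec r 0) as [H|H]; [exists 0%nat; simpl; lra|].
  destruct (archimed r) as [H1 H2].
  assert (0 < IZR (up r)) by lra. apply lt_0_IZR in H0.
  exists (Z.to_nat (up r)). rewrite INR_IZR_INZ, Znat.Z2Nat.id by lia. lra.
Qed.

Lemma pset_ext {X : Type} (E F : pset X) : (forall x, E x <-> F x) -> E = F.
Proof. intros H. apply functional_extensionality. intros x. apply propositional_extensionality. apply H. Qed.

Section Geo.
Variable X : Type.
Variable d : X -> X -> R.
Hypothesis Hmetric : is_metric d.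
Variable s : nat -> X.
Hypothesis Hs : forall x eps, 0 < eps -> exists n, d x (s n) < eps.
Variables xa xb : X.
Hypothesis Hxab : xa <> xb.

Lemma d_refl x : d x x = 0.
Proof. destruct Hmetric as [_ [H _]]. apply H. reflexivity. Qed.
Lemma d_pos x y : x <> y -> 0 < d x y.
Proof. intros Hne. destruct Hmetric as [H0 [H _]]. destruct (H0 x y) as [h|h]; auto. exfalso. apply Hne. apply H. auto. Qed.

Fixpoint dec (i m : nat) : nat :=
  match i with O => fst (Cantor.of_nat m) | S i' => dec i' (snd (Cantor.of_nat m)) end.
Definition fpt (m : nat) : path X := fun i => s (dec i m).

Lemma dense_pt n : forall (w : path X) e, 0 < e -> exists m, forall i, (i < n)%nat -> d (w i) (fpt m i) < e.
Proof.
  induction n; intros w e He.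
  - exists 0%nat. intros; lia.
  - destruct (Hs (w 0%nat) e He) as [k Hk].
    destruct (IHn (fun i => w (S i)) e He) as [m' Hm'].
    exists (Cantor.to_nat (k, m')). intros i Hi.
    destruct i as [|i'].
    + change (fpt (Cantor.to_nat (k,m')) 0%nat) with (s (fst (Cantor.of_nat (Cantor.to_nat (k, m'))))).
      rewrite Cantor.cancel_of_to. exact Hk.
    + change (fpt (Cantor.to_nat (k,m')) (S i')) with (s (dec i' (snd (Cantor.of_nat (Cantor.to_nat (k, m')))))).
      rewrite Cantor.cancel_of_to. apply (Hm' i'). lia.
Qed.

Lemma fin_ball (M : nat) (Ts : nat -> pset X) (w : path X) :
  (forall j, is_open d (Ts j)) ->
  exists n e, 0 < e /\ forall w', (forall i, (i < n)%nat -> d (w i) (w' i) < e) ->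
    forall j, (j < M)%nat -> Ts j w -> Ts j w'.
Proof.
  intros Hop. induction M.
  - exists 0%nat, 1. split; [lra|]. intros; lia.
  - destruct IHM as [n1 [e1 [He1 H1]]].
    destruct (classic (Ts M w)) as [HT|HT].
    + destruct (Hop M w HT) as [n2 [e2 [He2 H2]]].
      exists (Nat.max n1 n2), (Rmin e1 e2). split; [apply Rmin_glb_lt; auto|].
      intros w' Hw' j Hj Tj.
      assert (A : forall i, (i < n1)%nat -> d (w i) (w' i) < e1).
      { intros i Hi. eapply Rlt_le_trans; [apply Hw'; lia|apply Rmin_l]. }
      assert (B : forall i, (i < n2)%nat -> d (w i) (w' i) < e2).
      { intros i Hi. eapply Rlt_le_trans; [apply Hw'; lia|apply Rmin_r]. }
      destruct (Nat.eq_dec j M) as [->|Hne]; [apply H2; auto|apply (H1 w' A); auto; lia].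
    + exists n1, e1. split; auto. intros w' Hw' j Hj Tj.
      destruct (Nat.eq_dec j M) as [->|Hne]; [tauto|apply (H1 w' Hw'); auto; lia].
Qed.

Lemma fin_dense (M : nat) (Ts : nat -> pset X) (w : path X) :
  (forall j, is_open d (Ts j)) -> exists m, forall j, (j < M)%nat -> Ts j w -> Ts j (fpt m).
Proof.
  intros Hop. destruct (fin_ball M Ts w Hop) as [n [e [He H]]].
  destruct (dense_pt n w e He) as [m Hm]. exists m. apply H. exact Hm.
Qed.

Local Open Scope nat_scope.
Definition chain (m k : nat) : path X := fun i =>
  if Nat.ltb i k then fpt m i
  else if Nat.eqb i k then xb
  else if Nat.leb i (k + m) then xa
  else if Nat.eqb i (k + m + 1) then xb
  else if Nat.leb i (2 * k + m + 1) then xa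
  else if Nat.eqb i (2 * k + m + 2) then xb
  else xa.

Lemma chain_prefix m k i : (i < k)%nat -> chain m k i = fpt m i.
Proof. intros H. unfold chain. destruct (Nat.ltb_spec i k); [reflexivity|lia]. Qed.

Lemma chain_p m k : chain m k (2 * k + m + 2) = xb.
Proof.
  unfold chain. destruct (Nat.ltb_spec (2*k+m+2) k); [lia|].
  destruct (Nat.eqb_spec (2*k+m+2) k); [lia|].
  destruct (Nat.leb_spec (2*k+m+2) (k+m)); [lia|].
  destruct (Nat.eqb_spec (2*k+m+2) (k+m+1)); [lia|].
  destruct (Nat.leb_spec (2*k+m+2) (2*k+m+1)); [lia|].
  destruct (Nat.eqb_spec (2*k+m+2) (2*k+m+2)); [reflexivity|lia].
Qed.
Lemma chain_after m k i : (2 * k + m + 2 < i)%nat -> chain m k i = xa.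
Proof.
  intros H. unfold chain. destruct (Nat.ltb_spec i k); [lia|].
  destruct (Nat.eqb_spec i k); [lia|].
  destruct (Nat.leb_spec i (k+m)); [lia|].
  destruct (Nat.eqb_spec i (k+m+1)); [lia|].
  destruct (Nat.leb_spec i (2*k+m+1)); [lia|].
  destruct (Nat.eqb_spec i (2*k+m+2)); [lia|reflexivity].
Qed.
Lemma chain_q m k : chain m k (k + m + 1) = xb.
Proof.
  unfold chain. destruct (Nat.ltb_spec (k+m+1) k); [lia|].
  destruct (Nat.eqb_spec (k+m+1) k); [lia|].
  destruct (Nat.leb_spec (k+m+1) (k+m)); [lia|].
  destruct (Nat.eqb_spec (k+m+1) (k+m+1)); [reflexivity|lia].
Qed.
Lemma chain_mid m k i : (k + m + 2 <= i <= 2 * k + m + 1)%nat -> chain m k i = xa.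
Proof.
  intros H. unfold chain. destruct (Nat.ltb_spec i k); [lia|].
  destruct (Nat.eqb_spec i k); [lia|].
  destruct (Nat.leb_spec i (k+m)); [lia|].
  destruct (Nat.eqb_spec i (k+m+1)); [lia|].
  destruct (Nat.leb_spec i (2*k+m+1)); [reflexivity|lia].
Qed.

Lemma chain_inj m k m' k' : chain m k = chain m' k' -> m = m' /\ k = k'.
Proof.
  intros E.
  assert (Hp : (2 * k + m + 2 = 2 * k' + m' + 2)%nat).
  { destruct (Nat.lt_total (2*k+m+2) (2*k'+m'+2)) as [Hl|[He|Hl]]; auto; exfalso.
    - pose proof (chain_p m' k') as A. rewrite <- E in A. rewrite chain_after in A by lia. auto.
    - pose proof (chain_p m k) as A. rewrite E in A. rewrite chain_after in A by lia. auto. }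
  assert (Hk : k = k').
  { destruct (Nat.lt_total k k') as [Hl|[He|Hl]]; auto; exfalso.
    - pose proof (chain_q m k) as A. rewrite E in A. rewrite chain_mid in A by lia. auto.
    - pose proof (chain_q m' k') as A. rewrite <- E in A. rewrite chain_mid in A by lia. auto. }
  split; lia.
Qed.

Local Open Scope R_scope.
Lemma chain_conv (U : pset X) m : is_open d U -> U (fpt m) -> exists K, forall k, (K <= k)%nat -> U (chain m k).
Proof.
  intros Hop HU. destruct (Hop _ HU) as [n [e [He H]]].
  exists n. intros k Hk. apply H. intros i Hi. rewrite chain_prefix by lia. rewrite d_refl. exact He.
Qed.

Lemma open_neq (z : path X) : is_open d (fun w => w <> z).
Proof.
  intros w Hw.
  assert (exists i, w i <> z i).
  { apply NNPP. intro Hn. apply Hw. apply functional_extensionality. intros i.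
    apply NNPP. intro Hi. apply Hn. exists i. exact Hi. }
  destruct H as [i Hi]. exists (S i), (d (w i) (z i)). split; [apply d_pos; auto|].
  intros w' Hw' Heq. subst w'. specialize (Hw' i ltac:(lia)). lra.
Qed.

Variable Sig : pset X -> Prop.
Hypothesis HSigma : sigma_alg_opens d Sig.

Lemma Sig_single (z : path X) : Sig (fun w => w = z).
Proof.
  destruct HSigma as [_ [Hc [_ Ho]]].
  pose proof (Hc _ (Ho _ (open_neq z))) as A.
  replace (fun w => w = z) with (fun w => ~ (w <> z)); auto.
  apply pset_ext. intros w. split; [apply NNPP|tauto].
Qed.

Lemma Sig_empty : Sig (fun _ => False).
Proof.
  destruct HSigma as [Hf [Hc _]]. replace (fun _ : path X => False) with (fun w : path X => ~ full w).
  - apply Hc, Hf.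
  - apply pset_ext. unfold full. tauto.
Qed.

Lemma Sig_cond_single (z : path X) (Q : Prop) : Sig (fun w => w = z /\ Q).
Proof.
  destruct (classic Q) as [HQ|HQ].
  - replace (fun w => w = z /\ Q) with (fun w => w = z); [apply Sig_single|]. apply pset_ext; tauto.
  - replace (fun w => w = z /\ Q) with (fun _ : path X => False); [apply Sig_empty|]. apply pset_ext; tauto.
Qed.

Lemma Sig_chain_union (Q : nat -> nat -> Prop) :
  Sig (fun w => exists m k, w = chain m k /\ Q m k).
Proof.
  destruct HSigma as [_ [_ [Hu _]]].
  apply (Hu (fun m w => exists k, w = chain m k /\ Q m k)).
  intros m. apply (Hu (fun k w => w = chain m k /\ Q m k)).
  intros k. apply Sig_cond_single.
Qed.

End Geo.

Lemma Int_part_0 : Int_part 0 = 0%Z.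
Proof.
  destruct (base_Int_part 0) as [A B].
  assert (Int_part 0 <= 0)%Z by (apply le_IZR; simpl; lra).
  assert (-1 < Int_part 0)%Z by (apply lt_IZR; simpl; lra). lia.
Qed.

Lemma Int_jump (al x : R) : 0 <= al <= 1 ->
  IZR (Int_part (al * (x + 1))) = IZR (Int_part (al * x)) + indic (Int_part (al * (x + 1)) <> Int_part (al * x)).
Proof.
  intros Hal. destruct (base_Int_part (al * (x+1))) as [A1 B1]. destruct (base_Int_part (al * x)) as [A0 B0].
  set (I1 := Int_part (al * (x + 1))) in *. set (I0 := Int_part (al * x)) in *.
  assert (L1 : (-1 < I1 - I0)%Z) by (apply lt_IZR; rewrite minus_IZR; simpl; nra).
  assert (L2 : (I1 - I0 < 2)%Z) by (apply lt_IZR; rewrite minus_IZR; simpl; nra).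
  destruct (Z.eq_dec I1 I0) as [E|E].
  - rewrite indic_false by tauto. rewrite E. ring.
  - rewrite indic_true by tauto. assert (I1 = I0 + 1)%Z by lia. rewrite H, plus_IZR. simpl. ring.
Qed.

Lemma eventually_small (V : (nat -> Prop) -> Prop) (HV : ultra V)
  (HVc : forall N, V (fun n => (N <= n)%nat)) (K eta : R) : 0 < eta ->
  V (fun n => K / INR (S n) < eta).
Proof.
  intros He. destruct (nat_above (K / eta)) as [N HN].
  eapply (u_up V HV); [|apply (HVc N)]. intros n Hn.
  assert (INR N <= INR n) by (apply le_INR; exact Hn).
  assert (Hs : INR (S n) = INR n + 1) by apply S_INR.
  pose proof (pos_INR n).
  apply (Rmult_lt_reg_r (INR (S n))); [lra|]. unfold Rdiv. rewrite Rmult_assoc, Rinv_l by lra.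
  assert (K / eta < INR (S n)) by lra.
  apply (Rmult_lt_compat_r eta) in H1; auto. unfold Rdiv in H1. rewrite Rmult_assoc, Rinv_l in H1 by lra. lra.
Qed.

Section Dens.
Variable X : Type.
Variable d : X -> X -> R.
Hypothesis Hmetric : is_metric d.
Variable s : nat -> X.
Variables xa xb : X.
Variable V : (nat -> Prop) -> Prop.
Hypothesis HV : ultra V.
Hypothesis HVc : forall N, V (fun n => (N <= n)%nat).

Definition acnt (m : nat) (E : pset X) (k : nat) : R := fsum k (fun k' => indic (E (chain X s xa xb m k'))).
Definition Dm (m : nat) (E : pset X) : R := ulim V (fun n => acnt m E (S n) / INR (S n)).

Lemma acnt_bnd m E n : 0 <= acnt m E n <= INR n.
Proof.
  unfold acnt. split.
  - apply fsum_nonneg. intros; apply indic_01.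
  - rewrite <- (Rmult_1_r (INR n)), <- fsum_const. apply fsum_le. intros; apply indic_01.
Qed.

Lemma ratio01 m E n : 0 <= acnt m E (S n) / INR (S n) <= 1.
Proof.
  pose proof (acnt_bnd m E (S n)). assert (0 < INR (S n)) by apply lt_0_INR, Nat.lt_0_succ.
  split; [apply Rdiv_le_0_compat; lra|]. apply (Rmult_le_reg_r (INR (S n))); auto.
  unfold Rdiv. rewrite Rmult_assoc, Rinv_l by lra. lra.
Qed.

Lemma D_01 m E : 0 <= Dm m E <= 1.
Proof. apply ulim_01; auto. intros; apply ratio01. Qed.

Lemma D_add m E F : (forall x, E x -> F x -> False) -> Dm m (fun x => E x \/ F x) = Dm m E + Dm m F.
Proof.
  intros Hdis. unfold Dm. rewrite <- ulim_add; auto; try (apply bnd01; intros; apply ratio01).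
  f_equal. apply functional_extensionality. intros n. unfold acnt. unfold Rdiv.
  rewrite <- Rmult_plus_distr_r. f_equal. rewrite <- fsum_add. apply fsum_ext. intros k _.
  destruct (classic (E (chain X s xa xb m k))) as [HE|HE].
  - rewrite (indic_true (E _ \/ F _)) by tauto. rewrite indic_true by tauto. rewrite indic_false by eauto. ring.
  - destruct (classic (F (chain X s xa xb m k))) as [HF|HF].
    + rewrite (indic_true (E _ \/ F _)) by tauto. rewrite indic_false by tauto. rewrite indic_true by tauto. ring.
    + rewrite (indic_false (E _ \/ F _)) by tauto. rewrite !indic_false by tauto. ring.
Qed.

Lemma ulim_const (c : R) : ulim V (fun _ => c) = c.
Proof. apply ulim_unique; auto. intros eta He. eapply (u_up V HV); [|apply (u_full V HV)]. intros _ _. rewrite Rminus_diag, Rabs_R0. exact He. Qed.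

Lemma D_full m : Dm m full = 1.
Proof.
  unfold Dm. transitivity (ulim V (fun _ => 1)); [|apply ulim_const]. f_equal. apply functional_extensionality. intros n.
  unfold acnt. rewrite (fsum_ext _ _ (fun _ => 1)) by (intros; apply indic_true; exact I).
  rewrite fsum_const. field. pose proof (lt_0_INR (S n) (Nat.lt_0_succ n)). lra.
Qed.

Lemma acnt_tail m (E : pset X) K : (forall k, (K <= k)%nat -> E (chain X s xa xb m k)) ->
  forall n, INR n - INR K <= acnt m E n.
Proof.
  intros HK n. induction n.
  - unfold acnt. simpl. pose proof (pos_INR K). lra.
  - unfold acnt in *. simpl fsum. rewrite S_INR.
    destruct (Compare_dec.le_lt_dec K n) as [Hl|Hl].
    + rewrite indic_true by (apply HK; auto). lra.
    + pose proof (acnt_bnd m E n). unfold acnt in H. pose proof (indic_01 (E (chain X s xa xb m n))).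
      assert (INR (S n) <= INR K) by (apply le_INR; lia). rewrite S_INR in H1. lra.
Qed.

Lemma D_open m (U : pset X) : is_open d U -> U (fpt X s m) -> Dm m U = 1.
Proof.
  intros Hop HU. destruct (chain_conv X d Hmetric s xa xb U m Hop HU) as [K HK].
  pose proof (acnt_tail m U K HK) as A.
  apply Rle_antisym; [apply D_01|].
  apply Rnot_lt_le. intro Hlt.
  assert (Hge : 1 - (1 - Dm m U) / 2 <= Dm m U).
  { unfold Dm. apply ulim_ge; auto; [apply bnd01; intros; apply ratio01|].
    eapply (u_up V HV); [|apply (eventually_small V HV HVc (INR K) ((1 - Dm m U)/2) ltac:(lra))].
    intros n Hn. specialize (A (S n)). assert (0 < INR (S n)) by (apply lt_0_INR; lia).
    assert (1 - INR K / INR (S n) <= acnt m U (S n) / INR (S n)).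
    { apply (Rmult_le_reg_r (INR (S n))); auto. unfold Rdiv. rewrite Rmult_minus_distr_r, !Rmult_assoc, Rinv_l by lra. lra. }
    fold (Dm m U). lra. }
  lra.
Qed.

Lemma D_ge_indic m (U : pset X) : is_open d U -> indic (U (fpt X s m)) <= Dm m U.
Proof.
  intros Hop. destruct (classic (U (fpt X s m))) as [HU|HU].
  - rewrite indic_true by auto. rewrite D_open; auto. lra.
  - rewrite indic_false by auto. apply D_01.
Qed.

Definition Fsel (E : pset X) (al : R) : pset X := fun z =>
  E z /\ exists m k, z = chain X s xa xb m k /\
    Int_part (al * (acnt m E k + 1)) <> Int_part (al * acnt m E k).

Hypothesis Hxab : xa <> xb.

Lemma Fsel_chain E al m k : Fsel E al (chain X s xa xb m k) <->
  E (chain X s xa xb m k) /\ Int_part (al * (acnt m E k + 1)) <> Int_part (al * acnt m E k).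
Proof.
  split.
  - intros [HE [m' [k' [Hc J]]]]. apply chain_inj in Hc; auto. destruct Hc as [-> ->]. auto.
  - intros [HE J]. split; auto. exists m, k. auto.
Qed.

Lemma acnt_Fsel E al m n : 0 <= al <= 1 -> acnt m (Fsel E al) n = IZR (Int_part (al * acnt m E n)).
Proof.
  intros Hal. induction n.
  - unfold acnt. simpl. rewrite Rmult_0_r, Int_part_0. reflexivity.
  - unfold acnt in *. simpl fsum. rewrite IHn.
    destruct (classic (E (chain X s xa xb m n))) as [HE|HE].
    + rewrite (indic_true (E _)) by auto.
      rewrite (Int_jump al (fsum n (fun k' => indic (E (chain X s xa xb m k')))) Hal).
      f_equal. pose proof (propositional_extensionality _ _ (Fsel_chain E al m n)) as P. unfold acnt in P. rewrite P.
      destruct (classic (Int_part (al * (fsum n (fun k' => indic (E (chain X s xa xb m k'))) + 1)) <>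
         Int_part (al * fsum n (fun k' => indic (E (chain X s xa xb m k')))))) as [J|J].
      * rewrite !indic_true by tauto. reflexivity.
      * rewrite !indic_false by tauto. reflexivity.
    + rewrite (indic_false (E _)) by auto. rewrite indic_false.
      * rewrite !Rplus_0_r. reflexivity.
      * intro Hf. apply Fsel_chain in Hf. tauto.
Qed.

Lemma D_split m E al : 0 <= al <= 1 -> Dm m (Fsel E al) = al * Dm m E.
Proof.
  intros Hal. unfold Dm. rewrite <- ulim_scal; auto; [|apply bnd01; intros; apply ratio01].
  apply ulim_close; auto.
  - destruct (bnd01 _ (fun n => ratio01 m E n)) as [B HB]. exists (Rabs al * B). intros n.
    rewrite Rabs_mult. apply Rmult_le_compat_l; [apply Rabs_pos|apply HB].
  - intros eta He. eapply (u_up V HV); [|apply (eventually_small V HV HVc 1 eta He)].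
    intros n Hn. rewrite acnt_Fsel by auto.
    set (y := acnt m E (S n)). destruct (base_Int_part (al * y)) as [A B].
    assert (0 < INR (S n)) by (apply lt_0_INR; lia).
    replace (al * (y / INR (S n)) - IZR (Int_part (al * y)) / INR (S n)) with ((al * y - IZR (Int_part (al * y))) / INR (S n)) by (field; lra).
    unfold Rdiv. rewrite Rabs_mult, (Rabs_pos_eq (/ _)) by (left; apply Rinv_0_lt_compat; lra).
    rewrite Rabs_pos_eq by lra.
    assert ((al * y - IZR (Int_part (al * y))) * / INR (S n) < 1 * / INR (S n)).
    { apply Rmult_lt_compat_r; [apply Rinv_0_lt_compat; lra|lra]. }
    unfold Rdiv in Hn. lra.
Qed.

Lemma Fsel_sub E al z : Fsel E al z -> E z.
Proof. intros [H _]; exact H. Qed.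

Variable Sig : pset X -> Prop.
Hypothesis HSigma : sigma_alg_opens d Sig.

Lemma Sig_Fsel E al : Sig (Fsel E al).
Proof.
  pose proof (Sig_chain_union X d Hmetric s xa xb Sig HSigma
    (fun m k => E (chain X s xa xb m k) /\ Int_part (al * (acnt m E k + 1)) <> Int_part (al * acnt m E k))) as A.
  replace (Fsel E al) with (fun w => exists m k, w = chain X s xa xb m k /\
    (E (chain X s xa xb m k) /\ Int_part (al * (acnt m E k + 1)) <> Int_part (al * acnt m E k))); auto.
  apply pset_ext. intros w. split.
  - intros [m [k [-> H]]]. apply Fsel_chain. exact H.
  - intros [HE [m [k [-> J]]]]. exists m, k. auto.
Qed.

End Dens.

Section Wrap.
Variable X : Type.
Variable Sig : pset X -> Prop.
Variables xa xb : X.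
Hypothesis Hxab : xa <> xb.
Variable p : pset X -> R.
Hypothesis Hp0 : forall E, 0 <= p E.
Hypothesis Hp1 : p full = 1.
Hypothesis Hpadd : forall E F : pset X, (forall x, E x -> F x -> False) -> p (fun x => E x \/ F x) = p E + p F.
Hypothesis Hsn : strongly_nonatomic Sig p.

Lemma p_mono (E F : pset X) : (forall x, E x -> F x) -> p E <= p F.
Proof.
  intros H. replace F with (fun x => E x \/ (F x /\ ~ E x)).
  - rewrite Hpadd by tauto. pose proof (Hp0 (fun x => F x /\ ~ E x)). lra.
  - apply pset_ext. intros x. split; [intros [A|[A _]]; auto|]. intros A. destruct (classic (E x)); tauto.
Qed.

Definition fillf (t : nat) (w : path X) : path X := fun i => if Nat.ltb i t then w i else xa.

Definition fill (Hs : pset X) : path X :=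
  match excluded_middle_informative (exists tw : nat * path X, Hs = cyl (fst tw) (snd tw)) with
  | left e => let tw := proj1_sig (constructive_indefinite_description _ e) in fillf (fst tw) (snd tw)
  | right _ => fillf 0 (fun _ => xa)
  end.

Definition other (x : X) : X := if excluded_middle_informative (x = xa) then xb else xa.
Lemma other_ne (x : X) : other x <> x.
Proof. unfold other. destruct (excluded_middle_informative (x = xa)); congruence. Qed.

Lemma cyl_uniq (t : nat) (w : path X) (t' : nat) (w' : path X) : cyl t w = cyl t' w' -> t = t' /\ forall i, (i < t)%nat -> w i = w' i.
Proof.
  intros E.
  assert (A : forall i, (i < t')%nat -> w i = w' i).
  { assert (cyl t w w) by (intros i _; reflexivity). rewrite E in H. exact H. }
  assert (B : forall i, (i < t)%nat -> w' i = w i).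
  { assert (cyl t' w' w') by (intros i _; reflexivity). rewrite <- E in H. exact H. }
  assert (t = t').
  { destruct (Nat.lt_total t t') as [Hl|[He|Hl]]; auto; exfalso.
    - set (v := fun i => if Nat.eqb i t then other (w t) else w i).
      assert (cyl t w v). { intros i Hi. unfold v. destruct (Nat.eqb_spec i t); [lia|reflexivity]. }
      rewrite E in H. specialize (H t Hl). unfold v in H. rewrite Nat.eqb_refl in H.
      rewrite <- (A t Hl) in H. apply (other_ne (w t)). exact H.
    - set (v := fun i => if Nat.eqb i t' then other (w' t') else w' i).
      assert (cyl t' w' v). { intros i Hi. unfold v. destruct (Nat.eqb_spec i t'); [lia|reflexivity]. }
      rewrite <- E in H. specialize (H t' Hl). unfold v in H. rewrite Nat.eqb_refl in H.
      rewrite <- (B t' Hl) in H. apply (other_ne (w' t')). exact H. }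
  split; auto. intros i Hi. symmetry. apply B. auto.
Qed.

Lemma fill_cyl t w : fill (cyl t w) = fillf t w.
Proof.
  unfold fill. destruct (excluded_middle_informative _) as [e|n].
  - destruct (constructive_indefinite_description _ e) as [[t' w'] Htw]. simpl in *.
    symmetry in Htw. apply cyl_uniq in Htw. destruct Htw as [Ht Hag]. subst t'.
    apply functional_extensionality. intros i. unfold fillf.
    destruct (Nat.ltb_spec i t); auto.
  - exfalso. apply n. exists (t, w). reflexivity.
Qed.

Lemma fillf_in t w : cyl t w (fillf t w).
Proof. intros i Hi. unfold fillf. destruct (Nat.ltb_spec i t); [reflexivity|lia]. Qed.

Definition Pc (E Hs : pset X) : R :=
  if Rlt_dec 0 (p Hs) then p (fun x => E x /\ Hs x) / p Hs else indic (E (fill Hs)).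

Lemma Pc_full E : Pc E full = p E.
Proof.
  unfold Pc. rewrite Hp1. destruct (Rlt_dec 0 1); [|lra].
  replace (fun x => E x /\ full x) with E; [field|]. apply pset_ext. unfold full. tauto.
Qed.

Lemma Pc_cond : cond_opinion Sig Pc.
Proof.
  split; [|].
  2:{ replace (fun E => Pc E full) with p; [exact Hsn|]. apply functional_extensionality. intros E. symmetry. apply Pc_full. }
  intros t w. set (C := cyl t w).
  split; [|split].
  - split; [|split].
    + intros E _. unfold Pc. destruct (Rlt_dec 0 (p C)); [apply Rdiv_le_0_compat; auto|apply indic_01].
    + unfold Pc. destruct (Rlt_dec 0 (p C)).
      * replace (fun x => full x /\ C x) with C; [field; lra|]. apply pset_ext. unfold full. tauto.
      * apply indic_true. exact I.
    + intros E F _ _ Hd. unfold Pc. destruct (Rlt_dec 0 (p C)).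
      * replace (fun x => (E x \/ F x) /\ C x) with (fun x => (E x /\ C x) \/ (F x /\ C x)).
        -- rewrite Hpadd by (intros x [A _] [B _]; eauto). field. lra.
        -- apply pset_ext. tauto.
      * destruct (classic (E (fill C))) as [HE|HE].
        -- rewrite indic_true by tauto. rewrite (indic_true (E _)) by auto. rewrite indic_false by eauto. ring.
        -- rewrite (indic_false (E _)) by auto. destruct (classic (F (fill C))).
           ++ rewrite !indic_true by tauto. ring.
           ++ rewrite !indic_false by tauto. ring.
  - unfold Pc. destruct (Rlt_dec 0 (p C)).
    + replace (fun x => C x /\ C x) with C; [field; lra|]. apply pset_ext. tauto.
    + apply indic_true. unfold C. rewrite fill_cyl. apply fillf_in.
  - intros E n _. set (C' := cyl (t + n) w).
    assert (Hsub : forall x, C' x -> C x). { intros x Hx i Hi. apply Hx. lia. }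
    assert (EC : (fun x => (E x /\ C' x) /\ C x) = (fun x => E x /\ C' x)).
    { apply pset_ext. intros x. split; [tauto|]. intros [A B]. auto. }
    assert (CC : (fun x => C' x /\ C x) = C'). { apply pset_ext. intros x. split; [tauto|]. auto. }
    assert (HCC : p C' <= p C) by (apply p_mono; auto).
    unfold Pc. rewrite EC, CC.
    destruct (Rlt_dec 0 (p C)) as [HC|HC]; destruct (Rlt_dec 0 (p C')) as [HC'|HC'].
    + field. split; lra.
    + assert (p C' = 0) by (pose proof (Hp0 C'); lra).
      assert (p (fun x => E x /\ C' x) <= p C') by (apply p_mono; tauto).
      pose proof (Hp0 (fun x => E x /\ C' x)).
      assert (p (fun x => E x /\ C' x) = 0) by lra. rewrite H, H2. unfold Rdiv. ring.
    + lra.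
    + unfold C, C'. rewrite !fill_cyl.
      destruct (classic (cyl (t + n) w (fillf t w))) as [Hin|Hin].
      * assert (fillf t w = fillf (t + n) w).
        { apply functional_extensionality. intros i. unfold fillf at 2.
          destruct (Nat.ltb_spec i (t + n)).
          - apply Hin. auto.
          - unfold fillf. destruct (Nat.ltb_spec i t); [lia|reflexivity]. }
        rewrite (indic_true (cyl (t + n) w _)) by auto. rewrite <- H. rewrite Rmult_1_r.
        f_equal. apply propositional_extensionality. tauto.
      * rewrite (indic_false (cyl (t + n) w _)) by auto. rewrite indic_false by tauto. ring.
Qed.

Lemma wrap_exists : exists P : DeltaStar Sig, forall E, uncond P E = p E.
Proof. exists (exist _ Pc Pc_cond). intros E. unfold uncond. simpl. apply Pc_full. Qed.

End Wrap.

Lemma ultra_exists {I : Type} (F : (I -> Prop) -> Prop)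
  (Fup : forall A B : I -> Prop, (forall i, A i -> B i) -> F A -> F B)
  (Fand : forall A B : I -> Prop, F A -> F B -> F (fun i => A i /\ B i))
  (Ffull : F (fun _ => True))
  (Fne : ~ F (fun _ => False)) :
  exists U, ultra U /\ forall A, F A -> U A.
Proof.
  assert (PF : filter.ProperFilter F).
  { constructor.
    - exact Fne.
    - constructor.
      + exact Ffull.
      + intros A B HA HB. exact (Fand A B HA HB).
      + intros A B HAB HA. exact (Fup A B HAB HA). }
  destruct (filter.ultraFilterLemma PF) as [G [UG FG]].
  exists G. split; [|exact FG].
  pose proof (@filter.ultra_proper _ _ UG) as PG.
  pose proof (@filter.filter_filter _ _ PG) as FG'.
  constructor.
  - intros A B HAB HA. exact (@filter.filterS _ _ FG' A B HAB HA).
  - intros A B HA HB. exact (@filter.filterI _ _ FG' A B HA HB).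
  - exact (@filter.filterT _ _ FG').
  - exact (@filter.filter_not_empty _ G PG).
  - intros A. exact (filter.in_ultra_setVsetC A UG).
Qed.

Section Main.
Variable X : Type.
Variable d : X -> X -> R.
Hypothesis Hmetric : is_metric d.
Variable s : nat -> X.
Hypothesis Hsep : forall x eps, 0 < eps -> exists n, d x (s n) < eps.
Variables xa xb : X.
Hypothesis Hxab : xa <> xb.
Variable Sig : pset X -> Prop.
Hypothesis HSigma : sigma_alg_opens d Sig.
Variable eps c : R.
Hypothesis Hc : 0 < c <= 1.
Variable T : DeltaStar Sig -> pset X.
Hypothesis HTopen : forall P, is_open d (T P).
Hypothesis HTsize : forall P, uncond P (T P) <= eps.
Hypothesis Hneg : forall n (pt : nat -> DeltaStar Sig) (wt : nat -> R),
  (forall i, (i < n)%nat -> 0 <= wt i) -> fsum n wt = 1 ->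
  exists w, fsum n (fun i => wt i * indic (T (pt i) w)) > c.
Variables a b : nat.
Hypothesis Hb : (1 <= b)%nat.
Hypothesis Hab1 : INR a < INR b * c.
Hypothesis Hab2 : INR b * eps < INR a.
Variable V : (nat -> Prop) -> Prop.
Hypothesis HV : ultra V.
Hypothesis HVc : forall N, V (fun n => (N <= n)%nat).
Definition LT := (nat * (nat -> DeltaStar Sig))%type.
Variable U : (LT -> Prop) -> Prop.
Hypothesis HU : ultra U.
Hypothesis HUc : forall P, U (fun L => exists j, (j < fst L)%nat /\ snd L j = P).

Notation D := (Dm X s xa xb V).

Lemma hedgeL (L : LT) : exists Nms : nat * (nat -> nat), (0 < fst Nms)%nat /\
  forall j, (j < fst L)%nat -> INR a * INR (fst Nms) <= INR b * fsum (fst Nms) (fun t => indic (T (snd L j) (fpt X s (snd Nms t)))).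
Proof.
  destruct (hedge (fst L) (fun j m => T (snd L j) (fpt X s m)) c a b Hc Hb Hab1) as [N [ms [HN H]]].
  - intros wt Hw Hs1. destruct (Hneg (fst L) (snd L) wt Hw Hs1) as [w Hw'].
    destruct (fin_dense X d s Hsep (fst L) (fun j => T (snd L j)) w (fun j => HTopen _)) as [m Hm].
    exists m. apply Rlt_gt. eapply Rlt_le_trans; [apply Rgt_lt; exact Hw'|]. apply fsum_le. intros j Hj.
    apply Rmult_le_compat_l; [auto|]. apply indic_mono. apply Hm; auto.
  - exists (N, ms). simpl. auto.
Qed.

Definition NmsL (L : LT) := proj1_sig (constructive_indefinite_description _ (hedgeL L)).
Lemma NmsL_spec L : (0 < fst (NmsL L))%nat /\
  forall j, (j < fst L)%nat -> INR a * INR (fst (NmsL L)) <= INR b * fsum (fst (NmsL L)) (fun t => indic (T (snd L j) (fpt X s (snd (NmsL L) t)))).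
Proof. unfold NmsL. destruct (constructive_indefinite_description _ (hedgeL L)). simpl. auto. Qed.

Definition pL (L : LT) (E : pset X) : R :=
  fsum (fst (NmsL L)) (fun t => D (snd (NmsL L) t) E) / INR (fst (NmsL L)).

Lemma NL_pos L : 0 < INR (fst (NmsL L)).
Proof. apply lt_0_INR. apply NmsL_spec. Qed.

Lemma pL_01 L E : 0 <= pL L E <= 1.
Proof.
  unfold pL. pose proof (NL_pos L). set (N := fst (NmsL L)) in *.
  assert (0 <= fsum N (fun t => D (snd (NmsL L) t) E)) by (apply fsum_nonneg; intros; apply D_01; auto).
  assert (fsum N (fun t => D (snd (NmsL L) t) E) <= INR N).
  { rewrite <- (Rmult_1_r (INR N)), <- fsum_const. apply fsum_le. intros; apply D_01; auto. }
  split; [apply Rdiv_le_0_compat; auto|]. apply (Rmult_le_reg_r (INR N)); auto.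
  unfold Rdiv. rewrite Rmult_assoc, Rinv_l by lra. lra.
Qed.

Lemma pL_add L E F : (forall x, E x -> F x -> False) -> pL L (fun x => E x \/ F x) = pL L E + pL L F.
Proof.
  intros Hd. unfold pL. rewrite (fsum_ext _ _ (fun t => D (snd (NmsL L) t) E + D (snd (NmsL L) t) F)).
  - rewrite fsum_add. unfold Rdiv. ring.
  - intros. apply D_add; auto.
Qed.

Lemma pL_full L : pL L full = 1.
Proof.
  unfold pL. rewrite (fsum_ext _ _ (fun _ => 1)) by (intros; apply D_full; auto).
  rewrite fsum_const. pose proof (NL_pos L). field. lra.
Qed.

Lemma pL_split L E al : 0 <= al <= 1 -> pL L (Fsel X s xa xb E al) = al * pL L E.
Proof.
  intros Hal. unfold pL. rewrite (fsum_ext _ _ (fun t => al * D (snd (NmsL L) t) E)).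
  - rewrite fsum_scal. unfold Rdiv. ring.
  - intros. apply D_split; auto.
Qed.

Lemma pL_T L j : (j < fst L)%nat -> INR a <= INR b * pL L (T (snd L j)).
Proof.
  intros Hj. destruct (NmsL_spec L) as [_ H]. specialize (H j Hj).
  pose proof (NL_pos L). unfold pL. set (N := fst (NmsL L)) in *.
  assert (fsum N (fun t => indic (T (snd L j) (fpt X s (snd (NmsL L) t)))) <= fsum N (fun t => D (snd (NmsL L) t) (T (snd L j)))).
  { apply fsum_le. intros t _. apply (D_ge_indic X d); auto. }
  assert (HbR : 0 <= INR b) by apply pos_INR.
  apply (Rmult_le_reg_r (INR N)); auto.
  replace (INR b * (fsum N (fun t => D (snd (NmsL L) t) (T (snd L j))) / INR N) * INR N)
    with (INR b * fsum N (fun t => D (snd (NmsL L) t) (T (snd L j)))) by (field; lra).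
  eapply Rle_trans; [exact H|]. apply Rmult_le_compat_l; auto.
Qed.

Definition p (E : pset X) : R := ulim U (fun L => pL L E).

Lemma bnd_pL E : bnd (fun L => pL L E).
Proof. apply bnd01. intros; apply pL_01. Qed.

Lemma p_ge0 E : 0 <= p E.
Proof. apply ulim_01; auto. intros; apply pL_01. Qed.

Lemma p_full : p full = 1.
Proof.
  unfold p. apply ulim_unique; auto. intros e He. eapply (u_up U HU); [|apply (u_full U HU)].
  intros L _. rewrite pL_full, Rminus_diag, Rabs_R0. auto.
Qed.

Lemma p_add E F : (forall x, E x -> F x -> False) -> p (fun x => E x \/ F x) = p E + p F.
Proof.
  intros Hd. unfold p. rewrite <- ulim_add; auto using bnd_pL.
  f_equal. apply functional_extensionality. intros L. apply pL_add; auto.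
Qed.

Lemma p_sn : strongly_nonatomic Sig p.
Proof.
  intros E al HE Hal. exists (Fsel X s xa xb E al). split; [|split].
  - apply (Sig_Fsel X d Hmetric s xa xb Hxab Sig HSigma).
  - apply Fsel_sub.
  - unfold p. rewrite <- ulim_scal; auto using bnd_pL. f_equal. apply functional_extensionality. intros L. apply pL_split; auto.
Qed.

Lemma p_T P : INR a <= INR b * p (T P).
Proof.
  assert (HbR : 0 < INR b) by (apply lt_0_INR; lia).
  assert (INR a / INR b <= p (T P)).
  { unfold p. apply ulim_ge; auto using bnd_pL. eapply (u_up U HU); [|apply (HUc P)].
    intros L [j [Hj HP]]. pose proof (pL_T L j Hj) as A. rewrite HP in A.
    apply (Rmult_le_reg_l (INR b)); auto. replace (INR b * (INR a / INR b)) with (INR a) by (field; lra). exact A. }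
  apply (Rmult_le_compat_l (INR b)) in H; [|lra]. replace (INR b * (INR a / INR b)) with (INR a) in H by (field; lra). exact H.
Qed.

Lemma main_false : False.
Proof.
  destruct (wrap_exists X Sig xa xb Hxab p p_ge0 p_full p_add p_sn) as [P HP].
  pose proof (HTsize P) as A. rewrite HP in A. pose proof (p_T P).
  assert (0 <= INR b) by apply pos_INR.
  assert (INR b * p (T P) <= INR b * eps) by (apply Rmult_le_compat_l; auto). lra.
Qed.
End Main.

Theorem theorem5
  (X : Type) (d : X -> X -> R)
  (Hmetric : is_metric d) (Hsep : separable d)
  (Htwo : exists x y : X, x <> y)
  (Sig : pset X -> Prop) (HSigma : sigma_alg_opens d Sig)
  (eps : R) (Heps : 0 <= eps < 1)
  (T : DeltaStar Sig -> pset X)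
  (HTopen : forall P, is_open d (T P))
  (HTsize : forall P, uncond P (T P) <= eps) :
  forall delta : R, 0 < delta <= 1 - eps ->
  exists (n : nat) (pt : nat -> DeltaStar Sig) (wt : nat -> R),
    (forall i, (i < n)%nat -> 0 <= wt i) /\
    fsum n wt = 1 /\
    forall omega : path X,
      fsum n (fun i => wt i * indic (~ T (pt i) omega)) >= 1 - eps - delta.
Proof.
  intros delta Hdelta.
  destruct Htwo as [xa [xb Hxab]]. destruct Hsep as [s Hs].
  apply NNPP. intro Hn.
  set (c := eps + delta).
  assert (Hneg : forall n (pt : nat -> DeltaStar Sig) (wt : nat -> R),
    (forall i, (i < n)%nat -> 0 <= wt i) -> fsum n wt = 1 ->
    exists w, fsum n (fun i => wt i * indic (T (pt i) w)) > c).
  { intros n pt wt Hw Hs1. apply NNPP. intro Hno. apply Hn. exists n, pt, wt. split; [auto|split; auto].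
    intros w. apply Rle_ge.
    assert (fsum n (fun i => wt i * indic (T (pt i) w)) <= c) by (apply Rnot_gt_le; intro; apply Hno; exists w; auto).
    assert (E : fsum n (fun i => wt i * indic (~ T (pt i) w)) = fsum n wt - fsum n (fun i => wt i * indic (T (pt i) w))).
    { transitivity (fsum n (fun i => wt i + (-1) * (wt i * indic (T (pt i) w)))).
      2:{ rewrite fsum_add, fsum_scal. ring. }
      apply fsum_ext. intros i _. destruct (classic (T (pt i) w)) as [HT|HT].
      - rewrite (indic_true (T (pt i) w)) by auto. rewrite (indic_false (~ T (pt i) w)) by tauto. ring.
      - rewrite (indic_false (T (pt i) w)) by auto. rewrite (indic_true (~ T (pt i) w)) by auto. ring. }
    rewrite E, Hs1. unfold c in *. lra. }
  destruct (nat_above (2 / delta)) as [b0 Hb0].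
  set (b := S b0).
  assert (HbR : INR b = INR b0 + 1) by apply S_INR.
  assert (Hb0p : 0 <= INR b0) by apply pos_INR.
  assert (Hbd : 1 < INR b * delta).
  { assert (2 / delta * delta = 2) by (field; lra).
    assert (2 / delta * delta < INR b * delta) by (apply Rmult_lt_compat_r; lra). lra. }
  destruct (archimed (INR b * eps)) as [A1 A2].
  assert (Hup : (0 < up (INR b * eps))%Z).
  { apply lt_IZR. assert (0 <= INR b * eps) by (apply Rmult_le_pos; lra). lra. }
  set (a := Z.to_nat (up (INR b * eps))).
  assert (HaR : INR a = IZR (up (INR b * eps))) by (unfold a; rewrite INR_IZR_INZ, Znat.Z2Nat.id by lia; reflexivity).
  assert (Hab1 : INR a < INR b * c).
  { unfold c; rewrite HaR, Rmult_plus_distr_l. lra. }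
  assert (Hab2 : INR b * eps < INR a) by (rewrite HaR; lra).
  assert (Hc : 0 < c <= 1) by (unfold c; lra).
  destruct (ultra_exists (fun A : nat -> Prop => exists N, forall n, (N <= n)%nat -> A n)) as [V [HV HVF]].
  { intros A B HAB [N HN0]. exists N. auto. }
  { intros A B [N1 H1] [N2 H2]. exists (Nat.max N1 N2). intros n Hn0. split; [apply H1|apply H2]; lia. }
  { exists 0%nat. auto. }
  { intros [N HN0]. apply (HN0 N). lia. }
  assert (HVc : forall N, V (fun n => (N <= n)%nat)) by (intros N; apply HVF; exists N; auto).
  assert (P0 : exists P : DeltaStar Sig, True).
  { destruct (wrap_exists X Sig xa xb Hxab (Dm X s xa xb V 0)) as [P _].
    - intros E. apply D_01; auto.
    - apply D_full; auto.
    - intros E F Hd. apply D_add; auto.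
    - intros E al HE Hal. exists (Fsel X s xa xb E al). split; [|split].
      + apply (Sig_Fsel X d Hmetric s xa xb Hxab Sig HSigma).
      + apply Fsel_sub.
      + apply D_split; auto.
    - exists P; auto. }
  destruct P0 as [P0 _].
  set (incl := fun (L0 L : LT X Sig) => forall j, (j < fst L0)%nat -> exists j', (j' < fst L)%nat /\ snd L j' = snd L0 j).
  destruct (ultra_exists (fun A : LT X Sig -> Prop => exists L0, forall L, incl L0 L -> A L)) as [U [HU HUF]].
  { intros A B HAB [L0 H0]. exists L0. auto. }
  { intros A B [L1 H1] [L2 H2].
    exists (fst L1 + fst L2, fun j => if Nat.ltb j (fst L1) then snd L1 j else snd L2 (j - fst L1))%nat.
    intros L HL. split.
    - apply H1. intros j Hj. destruct (HL j ltac:(simpl; lia)) as [j' [Hj' E]]. exists j'. split; auto.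
      rewrite E. simpl. destruct (Nat.ltb_spec j (fst L1)); [reflexivity|lia].
    - apply H2. intros j Hj. destruct (HL (fst L1 + j)%nat ltac:(simpl; lia)) as [j' [Hj' E]]. exists j'. split; auto.
      rewrite E. simpl. destruct (Nat.ltb_spec (fst L1 + j) (fst L1)); [lia|]. f_equal. lia. }
  { exists (0%nat, fun _ : nat => P0). auto. }
  { intros [L0 H0]. apply (H0 L0). intros j Hj. exists j. auto. }
  assert (HUc : forall P, U (fun L => exists j, (j < fst L)%nat /\ snd L j = P)).
  { intros P. apply HUF. exists (1%nat, fun _ : nat => P). intros L HL.
    destruct (HL 0%nat ltac:(simpl; lia)) as [j' [Hj' E]]. exists j'. auto. }
  exact (main_false X d Hmetric s Hs xa xb Hxab Sig HSigma eps c Hc T HTopen HTsize Hneg a b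
    ltac:(unfold b; lia) Hab1 Hab2 V HV HVc U HU HUc).
Qed.
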